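(* For any collection $\mathcal X$ of arcs of the $\infty$-gon, the collection $\mathsf{nc}\,\mathcal X$ is a Ptolemy diagram.
   Context: An arc of the $\infty$-gon is a pair $(i,j)$ of integers with $j-i\ge 2$. Two arcs $(i,j),(k,l)$ cross if $i<k<j<l$ or $k<i<l<j$. For a collection $\mathcal X$ of arcs, $\mathsf{nc}\,\mathcal X$ denotes the set of all arcs that cross no arc of $\mathcal X$. A Ptolemy diagram of the $\infty$-gon is a collection $\mathcal X$ of arcs such that whenever $(i,j),(r,s)\in\mathcal X$ cross with $i<r$, each of the pairs $(i,r),(i,s),(r,j),(j,s)$ which is an arc (i.e. whose entries differ by at least $2$) lies in $\mathcal X$. *)

(* Defs.v *)
From Stdlib Require Import ZArith.
Open Scope Z_scope.

(* An arc of the infinity-gon: a pair (i,j) of integers with j - i >= 2. *)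
Definition is_arc (a : Z * Z) : Prop := fst a + 2 <= snd a.

Definition collection (X : Z * Z -> Prop) : Prop := forall a, X a -> is_arc a.

Definition cross (a b : Z * Z) : Prop :=
  let (i, j) := a in let (k, l) := b in
  (i < k /\ k < j /\ j < l) \/ (k < i /\ i < l /\ l < j).

Definition nc (X : Z * Z -> Prop) : Z * Z -> Prop :=
  fun a => is_arc a /\ forall b, X b -> ~ cross a b.

Definition ptolemy (X : Z * Z -> Prop) : Prop :=
  collection X /\
  forall i j r s, X (i, j) -> X (r, s) -> cross (i, j) (r, s) -> i < r ->
    (is_arc (i, r) -> X (i, r)) /\ (is_arc (i, s) -> X (i, s)) /\
    (is_arc (r, j) -> X (r, j)) /\ (is_arc (j, s) -> X (j, s)).

(* Main.v *)
Require Import Defs.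
From Stdlib Require Import ZArith Lia.

Theorem mainTheorem2 (X : Z * Z -> Prop) (hX : collection X) : ptolemy (nc X).
Proof.
  split.
  - intros a [Ha _]; exact Ha.
  - intros i j r s [Hij N1] [Hrs N2] Hc Hir.
    unfold cross in Hc.
    repeat split; try assumption;
    intros [k l] Hb Hcr; pose proof (N1 _ Hb) as A; pose proof (N2 _ Hb) as B;
    unfold cross in A, B, Hcr; simpl in *; lia.
Qed.
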